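(* Let $G_1$ be a group and $k\ge1$ an integer such that $|G_1:C_{G_1}(a)|\le k$ for every $a\in G_1$. Let $n,m\ge0$, let $G\le G_1^n$ be a subgroup, let $w(\bar x,\bar y)$ be a group word in the variables $\bar x=(x_1,\dots,x_n)$, $\bar y=(y_1,\dots,y_m)$ and their inverses, and let $\bar g\in G_1^m$, $c\in G_1$. If the set $\{\bar h\in G:w(\bar h,\bar g)=c\}$ is $2k^{n^2+mn}$-large in $G$, then $w(\bar h,\bar g)=c$ for all $\bar h\in G$.
   Context: A subset $X\subseteq G$ is $k$-large in $G$ if the intersection of any $k$ left translates $\bar a_1X\cap\dots\cap\bar a_kX$ ($\bar a_i\in G$) is non-empty. *)

(* Defs.v *)
From HB Require Import structures.
From mathcomp Require Import all_boot monoid.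
Set Implicit Arguments. Unset Strict Implicit. Unset Printing Implicit Defensive.
Local Open Scope group_scope.

Definition centralizer (G1 : groupType) (a : G1) : G1 -> Prop :=
  fun x => x * a = a * x.

(* |G1 : H| <= k : the left cosets of H are at most k, i.e. G1 is covered
   by k left cosets t_1 H, ..., t_k H. *)
Definition index_le (G1 : groupType) (H : G1 -> Prop) (k : nat) : Prop :=
  exists t : 'I_k -> G1, forall g : G1, exists i : 'I_k, H ((t i)^-1 * g).

Definition tup (G1 : groupType) (n : nat) := {ffun 'I_n -> G1}.
Definition tmul (G1 : groupType) n (u v : tup G1 n) : tup G1 n :=
  [ffun i => u i * v i].
Definition tinv (G1 : groupType) n (u : tup G1 n) : tup G1 n :=
  [ffun i => (u i)^-1].
Definition tone (G1 : groupType) n : tup G1 n := [ffun _ => 1].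

Definition is_subgroup (G1 : groupType) n (G : tup G1 n -> Prop) : Prop :=
  [/\ G (tone G1 n),
      forall u v, G u -> G v -> G (tmul u v)
    & forall u, G u -> G (tinv u)].

(* X is K-large in G: any K left translates a_1 X, ..., a_K X (a_i in G)
   have a common point. *)
Definition large (G1 : groupType) n (G X : tup G1 n -> Prop) (K : nat) : Prop :=
  forall a : 'I_K -> tup G1 n, (forall i, G (a i)) ->
    exists x : tup G1 n, forall i, X (tmul (tinv (a i)) x).

Inductive gword (n m : nat) : Type :=
  | WX of 'I_n
  | WY of 'I_m
  | WOne
  | WMul of gword n m & gword n m
  | WInv of gword n m.

Fixpoint weval (G1 : groupType) n m (w : gword n m)
    (x : tup G1 n) (y : tup G1 m) : G1 :=
  match w with
  | WX i => x i
  | WY j => y j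
  | WOne => 1
  | WMul u v => weval u x y * weval v x y
  | WInv u => (weval u x y)^-1
  end.

(* Main.v *)
Require Import Defs.
From Stdlib Require Import ClassicalEpsilon.
From HB Require Import structures.
From mathcomp Require Import all_boot monoid.
Local Open Scope group_scope.

Section Aux.
Variable G1 : groupType.

Lemma cent_inv (b z : G1) : centralizer b z -> centralizer b z^-1.
Proof. rewrite /centralizer => h; apply: commute_sym; apply: commuteV; exact: commute_sym. Qed.

Lemma cent_mul (b z z' : G1) : centralizer b z -> centralizer b z' -> centralizer b (z * z').
Proof.
rewrite /centralizer => h1 h2.
by rewrite -mulgA h2 !mulgA h1.
Qed.

Lemma comm_word n m (w : gword n m) (v : tup G1 n) (g : tup G1 m) (z : G1) :
  (forall i, z * v i = v i * z) -> (forall j, z * g j = g j * z) ->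
  z * weval w v g = weval w v g * z.
Proof.
move=> hv hg; elim: w => [i|j| |u IHu u' IHu'|u IHu] /=.
- exact: hv.
- exact: hg.
- by rewrite mulg1 mul1g.
- by rewrite mulgA IHu -mulgA IHu' mulgA.
- have := commuteV (x:=z) (y:=weval u v g) IHu. done.
Qed.

Lemma split_eval n m (w : gword n m) (v u : tup G1 n) (g : tup G1 m) :
  (forall i j, u i * v j = v j * u i) -> (forall i j, u i * g j = g j * u i) ->
  weval w (tmul v u) g = weval w v g * weval w u (tone G1 m).
Proof.
move=> huv hug.
have hc : forall w1 w2 : gword n m,
    weval w1 u (tone G1 m) * weval w2 v g = weval w2 v g * weval w1 u (tone G1 m).
  move=> w1 w2; elim: w1 => [i|j| |a IHa b IHb|a IHa] /=.
  - apply: comm_word => j; [exact: huv | exact: hug].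
  - by rewrite ffunE mul1g mulg1.
  - by rewrite mul1g mulg1.
  - by rewrite -mulgA IHb !mulgA IHa.
  - by apply: commute_sym; apply: commuteV; apply: commute_sym.
elim: w => [i|j| |a IHa b IHb|a IHa] /=.
- by rewrite ffunE.
- by rewrite ffunE mulg1.
- by rewrite mulg1.
- rewrite IHa IHb -!mulgA; congr (_ * _); rewrite !mulgA; congr (_ * _).
  by rewrite hc.
- rewrite IHa invgM; apply: commute_sym; apply: commuteV; apply: commute_sym.
  apply: commuteV; exact: hc.
Qed.

End Aux.

Theorem theorem3p3 (G1 : groupType) (k : nat) (hk : (1 <= k)%N)
  (hidx : forall a : G1, index_le (centralizer a) k)
  (n m : nat) (G : tup G1 n -> Prop) (hG : is_subgroup G)
  (w : gword n m) (g : tup G1 m) (c : G1)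
  (hlarge : large G (fun h => G h /\ weval w h g = c)
                    (2 * k ^ (n ^ 2 + m * n))%N) :
  forall h, G h -> weval w h g = c.
Proof.
case: hG => G1t Gmul Ginv.
suff key : forall h0, G h0 -> weval w h0 g = weval w (tone G1 n) g.
  move=> h Gh; rewrite key //.
  have [x hx] := hlarge (fun _ => tone G1 n) (fun _ => G1t).
  have [i0 _] : exists i : 'I_(2 * k ^ (n ^ 2 + m * n)), true.
    have p0 : (0 < 2 * k ^ (n ^ 2 + m * n))%N by rewrite muln_gt0 expn_gt0 hk.
    by exists (Ordinal p0).
  have [Gx <-] := hx i0.
  by rewrite key.
move=> h0 Gh0.
pose t (a : G1) : 'I_k -> G1 := proj1_sig (constructive_indefinite_description _ (hidx a)).
have ht : forall a z, exists i, centralizer a ((t a i)^-1 * z).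
  move=> a z; rewrite /t; case: (constructive_indefinite_description _ _) => /= tt htt.
  exact: htt.
pose elt (b : 'I_n + 'I_m) : G1 := match b with inl i => h0 i | inr j => g j end.
pose Lab := {ffun 'I_n * ('I_n + 'I_m) -> 'I_k}.
pose P (l : Lab) (x : tup G1 n) := forall i b, centralizer (elt b) ((t (elt b) (l (i, b)))^-1 * x i).
pose R (l : Lab) : tup G1 n :=
  match excluded_middle_informative (exists x, G x /\ P l x) with
  | left e => proj1_sig (constructive_indefinite_description _ e)
  | right _ => tone G1 n end.
have GR : forall l, G (R l).
  move=> l; rewrite /R; case: excluded_middle_informative => // e.
  by case: (constructive_indefinite_description _ _) => /= y [].
have PR : forall l x, G x -> P l x -> P l (R l).
  move=> l x Gx Px; rewrite /R; case: excluded_middle_informative => [e|ne].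
    by case: (constructive_indefinite_description _ _) => /= y [].
  by case: ne; exists x.
have lab : forall x : tup G1 n, exists l, P l x.
  move=> x.
  exists [ffun p => proj1_sig (constructive_indefinite_description _ (ht (elt p.2) (x p.1)))].
  move=> i b; rewrite ffunE /=.
  by case: (constructive_indefinite_description _ _).
pose M := #|{: Lab}|.
have eM : (2 * k ^ (n ^ 2 + m * n) = 2 * M)%N.
  rewrite /M card_ffun card_prod card_sum !card_ord; congr (_ * (_ ^ _))%N.
  by rewrite mulnDr -mulnn mulnC.
rewrite eM in hlarge.
have l0 : Lab by exact: [ffun _ => Ordinal hk].
pose a (i : 'I_(2 * M)) : tup G1 n :=
  if (i < M)%N then R (nth l0 (enum Lab) i)
  else tmul (R (nth l0 (enum Lab) (i - M))) (tinv h0).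
have Ga : forall i, G (a i).
  move=> i; rewrite /a; case: ifP => _; first exact: GR.
  by apply: Gmul; [exact: GR | exact: Ginv].
have [x hx] := hlarge a Ga.
have Gx : G x.
  have i0 : 'I_(2 * M).
    exists 0%N; rewrite muln_gt0 /=; apply/card_gt0P; by exists l0.
  have [Gy _] := hx i0.
  have := Gmul _ _ (Ga i0) Gy.
  congr G; apply/ffunP => i; rewrite !ffunE mulgA mulgV mul1g //.
have [l Pl] := lab x.
have lin : l \in enum Lab by rewrite mem_enum.
have idxlt : (index l (enum Lab) < M)%N by rewrite /M cardE index_mem.
pose y := R l.
have i1lt : (index l (enum Lab) < 2 * M)%N by apply: (leq_trans idxlt); rewrite mul2n -addnn leq_addr.
have ay : a (Ordinal i1lt) = y.
  by rewrite /a /= idxlt nth_index.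
have i2lt : (index l (enum Lab) + M < 2 * M)%N by rewrite mul2n -addnn ltn_add2r.
have ay2 : a (Ordinal i2lt) = tmul y (tinv h0).
  by rewrite /a /= ltnNge leq_addl /= addnK nth_index.
have := hx (Ordinal i2lt); have := hx (Ordinal i1lt).
rewrite ay ay2.
set nn := tmul (tinv y) x.
move=> [_ e1] [_ e2].
have Py := PR l x Gx Pl.
have cn : forall i b, centralizer (elt b) (nn i).
  move=> i b; rewrite /nn ffunE ffunE.
  have -> : (y i)^-1 * x i = ((t (elt b) (l (i, b)))^-1 * y i)^-1 * ((t (elt b) (l (i, b)))^-1 * x i).
    by rewrite invgM invgK !mulgA mulgK.
  by apply: cent_mul; [apply: cent_inv; exact: Py | exact: Pl].
have e2' : tmul (tinv (tmul y (tinv h0))) x = tmul h0 nn.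
  by apply/ffunP => i; rewrite !ffunE invgM invgK !mulgA.
rewrite e2' in e2.
have enn : nn = tmul (tone G1 n) nn by apply/ffunP => i; rewrite !ffunE mul1g.
rewrite enn in e1.
rewrite split_eval in e1; last 2 first.
- by move=> i j; rewrite !ffunE mulg1 mul1g.
- by move=> i j; exact: (cn i (inr j)).
rewrite split_eval in e2; last 2 first.
- by move=> i j; exact: (cn i (inl j)).
- by move=> i j; exact: (cn i (inr j)).
by apply: (mulIg (weval w nn (tone G1 m))); rewrite e1 e2.
Qed.
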